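(* Let $C=(1,c_2,c_3,c_4,c_5,c_6)=(1,c_2,2c_2,c_4,c_2+c_4,2c_4)$ be a system that is canonical and whose subsystem $(1,c_2,c_3,c_4,c_5)$ is noncanonical, and let $\ell=\lceil c_5/c_3\rceil$. Then $c_4\ge 3c_2-1$, $c_4\ne 3c_2$, $\mathrm{grd}_C(\ell c_3)\le\ell$, and $\mathrm{grd}_C(\ell c_3)=\ell c_3-c_5+1-\lfloor(\ell c_3-c_5)/c_2\rfloor(c_2-1)$.
   Context: A system is a tuple $C=(c_1,\dots,c_n)$ of integers with $1=c_1<c_2<\dots<c_n$; for $k\le n$, $(c_1,\dots,c_k)$ is a subsystem. For a positive integer $v$, $\mathrm{opt}_C(v)$ is the minimum of $\sum_i x_i$ over $x\in\mathbb{Z}_{\ge0}^n$ with $\sum_i c_ix_i=v$. The greedy representation of $v$ is produced by: for $i=n$ down to $1$, while $c_i\le$ remaining value, take a coin $c_i$. $\mathrm{grd}_C(v)$ is its number of coins. A positive integer $w$ is a counterexample if $\mathrm{opt}_C(w)<\mathrm{grd}_C(w)$; $C$ is canonical if it has none, noncanonical otherwise. *)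

(* Defs.v *)
From mathcomp Require Import all_boot all_order all_algebra.
Set Implicit Arguments. Unset Strict Implicit. Unset Printing Implicit Defensive.

Definition is_system (C : seq nat) : bool :=
  (0 < size C) && (nth 0 C 0 == 1) && sorted ltn C.

Definition is_rep (C : seq nat) (x : seq nat) (v : nat) : Prop :=
  size x = size C /\ \sum_(i < size C) nth 0 C i * nth 0 x i = v.

Definition ncoins (x : seq nat) : nat := \sum_(a <- x) a.

(* Greedy: from the largest coin down, take coin c_i while c_i <= remaining
   value; for c_i > 0 this takes (r %/ c_i) coins and leaves r %% c_i.
   Returns (remaining, number of coins taken). *)
Definition greedy_step (c : nat) (p : nat * nat) : nat * nat :=
  (p.1 %% c, p.2 + p.1 %/ c).

Definition grd (C : seq nat) (v : nat) : nat := (foldr greedy_step (v, 0) C).2.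

(* opt_C(w) < grd_C(w), unfolded: some representation of w uses fewer coins
   than the greedy one. *)
Definition counterexample (C : seq nat) (w : nat) : Prop :=
  0 < w /\ exists x, is_rep C x w /\ ncoins x < grd C w.

Definition canonical (C : seq nat) : Prop := forall w, ~ counterexample C w.

(* Main.v *)
Require Import Defs.
From mathcomp Require Import all_boot all_order all_algebra zify.
Import GRing.Theory Num.Theory.

Lemma splitA a n r k : r < a ->
  a*n + r = n %/ k.+1 * (a * k.+1) + (a * (n %% k.+1) + r) /\ a*(n%%k.+1) + r < a*k.+1.
Proof.
move=> ra; split.
  by rewrite {1}(divn_eq n k.+1) mulnDr addnA mulnCA mulnC.
have h := ltn_pmod n (ltn0Sn k).
by have := leq_mul (leqnn a) h; rewrite mulnS; lia.
Qed.

Lemma dA a n r k : r < a -> (a*n + r) %/ (a*k.+1) = n %/ k.+1.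
Proof.
move=> ra; have [-> lt] := splitA a n r k ra.
have a0 : 0 < a by case: a ra {lt}.
by rewrite divnMDl ?muln_gt0 ?a0 // (divn_small lt) addn0.
Qed.

Lemma mA a n r k : r < a -> (a*n + r) %% (a*k.+1) = a * (n %% k.+1) + r.
Proof.
move=> ra; have [-> lt] := splitA a n r k ra.
by rewrite modnMDl modn_small.
Qed.

Lemma dA1 a n r : r < a -> (a*n + r) %/ a = n.
Proof.
move=> ra; have a0 : 0 < a by case: a ra.
by rewrite mulnC divnMDl // (divn_small ra) addn0.
Qed.
Lemma mA1 a n r : r < a -> (a*n + r) %% a = r.
Proof. by move=> ra; rewrite mulnC modnMDl (modn_small ra). Qed.

Lemma canonD a : 0 < a -> canonical [:: 1; a; 2*a; 3*a; a + 3*a].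
Proof.
move=> a0 w [_ [x [[Hsz Hsum] Hlt]]].
case: x Hsz Hsum Hlt => [|x1 [|x2 [|x3 [|x4 [|x5 [|]]]]]] //= _.
rewrite !big_ord_recl big_ord0 /= => Hsum.
rewrite /ncoins !big_cons big_nil /grd /= /greedy_step /=.
have e4 : a + 3 * a = a * 4 by lia.
have e3 : 3 * a = a * 3 by lia.
have e2 : 2 * a = a * 2 by lia.
rewrite e4 e3 e2.
have Hr : w %% a < a by rewrite ltn_pmod.
rewrite (divn_eq w a) mulnC.
rewrite !mA // !dA // mA1 // dA1 // divn1.
have Ew := divn_eq w a; have Ex := divn_eq x1 a.
have Hs : x1 %% a < a by rewrite ltn_pmod.
have Hx : x1 %/ a + x1 %% a <= x1.
  by rewrite {3}Ex leq_add2r leq_pmulr.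
move: Ew Ex Hs Hr Hx Hsum.
move: (w %/ a) (w %% a) (x1 %/ a) (x1 %% a) => n r p s Ew Ex Hs Hr Hx Hsum.
have E : a * (p + (x2 + 2 * x3 + 3 * x4 + 4 * x5)) + s = a * n + r.
  rewrite Ex in Hsum; lia.
have E1 := congr1 (fun t => t %/ a) E.
have E2 := congr1 (fun t => t %% a) E.
rewrite /= !dA1 // in E1.
rewrite /= !mA1 // in E2.
clear E Hsum Ew Ex e4 e3 e2; lia.
Qed.

Lemma div_one w b : b <= w -> w < 2 * b -> w %/ b = 1 /\ w %% b = w - b.
Proof.
move=> h1 h2.
have b0 : 0 < b by lia.
have -> : w = 1 * b + (w - b) by lia.
rewrite divnMDl // modnMDl divn_small ?modn_small; lia.
Qed.

Theorem lemma10 (c2 c4 : nat) :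
  let C := [:: 1; c2; 2 * c2; c4; c2 + c4; 2 * c4] in
  let c3 := 2 * c2 in
  let c5 := c2 + c4 in
  let l := (c5 + c3 - 1) %/ c3 in
  is_system C ->
  canonical C ->
  ~ canonical (take 5 C) ->
  [/\ 3 * c2 - 1 <= c4,
      c4 != 3 * c2,
      grd C (l * c3) <= l &
      (grd C (l * c3) : int) =
        ((l * c3)%:Z - c5%:Z + 1 - ((l * c3 - c5) %/ c2)%:Z * (c2%:Z - 1))%R].
Proof.
move=> C c3 c5 l Hs Hc Hnc.
move: Hs; rewrite /is_system /= andbT => /and5P[h1 _ h2 _ h3].
have P1 : 3 * c2 - 1 <= c4.
  case: (leqP (3 * c2 - 1) c4) => // Hlt; exfalso.
  apply: (Hc (3 * c2)); split; first lia.
  exists [:: 0; 1; 1; 0; 0; 0]; split.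
    split => //. rewrite !big_ord_recl big_ord0 /=. lia.
  rewrite /ncoins !big_cons big_nil /grd /= /greedy_step /=.
  have [d1 m1] := div_one (3 * c2) c4 ltac:(lia) ltac:(lia).
  rewrite (divn_small (_ : 3 * c2 < 2 * c4)); last lia.
  rewrite (modn_small (_ : 3 * c2 < 2 * c4)); last lia.
  rewrite (divn_small (_ : 3 * c2 < c2 + c4)); last lia.
  rewrite (modn_small (_ : 3 * c2 < c2 + c4)); last lia.
  rewrite d1 m1.
  rewrite (divn_small (_ : 3 * c2 - c4 < 2 * c2)); last lia.
  rewrite (modn_small (_ : 3 * c2 - c4 < 2 * c2)); last lia.
  rewrite (divn_small (_ : 3 * c2 - c4 < c2)); last lia.
  rewrite (modn_small (_ : 3 * c2 - c4 < c2)); last lia.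
  rewrite divn1; lia.
have P2 : c4 != 3 * c2.
  apply/eqP => E; apply: Hnc; rewrite /C /= E.
  apply: canonD; lia.
have Hl := divn_eq (c5 + c3 - 1) c3.
have Hm : (c5 + c3 - 1) %% c3 < c3 by rewrite ltn_pmod // /c3; lia.
have Hw1 : c5 <= l * c3 by rewrite /l; lia.
have Hw2 : l * c3 < c5 + c3 by rewrite /l; lia.
have P3 : grd C (l * c3) <= l.
  rewrite leqNgt; apply/negP => Hlt.
  apply: (Hc (l * c3)); split; first by rewrite /c5 in Hw1; lia.
  exists [:: 0; 0; l; 0; 0; 0]; split.
    split => //. rewrite !big_ord_recl big_ord0 /=. rewrite /c3; lia.
  by rewrite /ncoins !big_cons big_nil /= !add0n addn0.
have Hw3 : l * c3 < 2 * c4.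
  case: (leqP (3 * c2) c4) => hc; first by rewrite /c3 /c5 in Hw2 *; lia.
  have hl : l <= 2.
    rewrite leqNgt; apply/negP => hl.
    have := leq_mul hl (leqnn c3); rewrite /c3 /c5 in Hw2 *; lia.
  have := leq_mul hl (leqnn c3); rewrite /c3; lia.
split => //.
move: Hw1 Hw2 Hw3; rewrite /C /grd /= /greedy_step /=.
move: (l * c3) => w Hw1 Hw2 Hw3.
rewrite /c5 /c3 in Hw1 Hw2 Hw3 *.
have [d1 m1] := div_one w (c2 + c4) ltac:(lia) ltac:(lia).
rewrite (divn_small (_ : w < 2 * c4)); last lia.
rewrite (modn_small (_ : w < 2 * c4)); last lia.
rewrite d1 m1.
rewrite (divn_small (_ : w - (c2 + c4) < c4)); last lia.
rewrite (modn_small (_ : w - (c2 + c4) < c4)); last lia.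
rewrite (divn_small (_ : w - (c2 + c4) < 2 * c2)); last lia.
rewrite (modn_small (_ : w - (c2 + c4) < 2 * c2)); last lia.
rewrite divn1.
have Er := divn_eq (w - (c2 + c4)) c2.
have Ew : w = c2 + c4 + (w - (c2 + c4)) by lia.
move: Er Ew; move: (w - (c2 + c4)) ((w - (c2 + c4)) %/ c2) ((w - (c2 + c4)) %% c2) => r q s Er Ew.
rewrite Ew Er; clear.
lia.
Qed.
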